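(* Let $\mathcal S=(\mathcal P,\mathcal L)$ be a linear space with $v$ points and constant line size $k$, $2<k<v$, let $G\le\mathrm{Aut}(\mathcal S)$ be transitive on lines, and let $\mathfrak C$ be a non-trivial $G$-invariant partition of $\mathcal P$ with $d$ classes of size $c$. Then (i) $|\mathrm{spec}\,\mathcal S|\ge 2$; (ii) $c\notin\mathrm{spec}\,\mathcal S$; (iii) if $\mathrm{spec}\,\mathcal S=\{1,h\}$ with $h\ge 2$, then for each class $C\in\mathfrak C$ the induced linear space $\mathcal S|_C$ has constant line size $h$.
   Context: A linear space $\mathcal S=(\mathcal P,\mathcal L)$: a finite set $\mathcal P$ of points and a set $\mathcal L$ of subsets (lines) such that any two distinct points lie on exactly one line and each line has at least two points. Line-transitivity of $G$ implies point-transitivity. A partition is non-trivial if it has more than one class and its classes have more than one element; $G$-invariant means $G$ permutes the classes. For a line $\lambda$ and $i\ge0$, let $d_i$ be the number of classes $C\in\mathfrak C$ with $|C\cap\lambda|=i$ (independent of $\lambda$ by line-transitivity); $\mathrm{spec}\,\mathcal S=\{i>0: d_i\ne0\}$. For $F\subseteq\mathcal P$ with $|F|\ge2$, the induced linear space is $\mathcal S|_F=(F,\{\lambda\cap F:\lambda\in\mathcal L,\ |\lambda\cap F|\ge2\})$. *)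

(* Defs.v *)
From mathcomp Require Import all_boot fingroup perm.
Set Implicit Arguments. Unset Strict Implicit. Unset Printing Implicit Defensive.

Definition linear_space (T : finType) (L : {set {set T}}) : Prop :=
  (forall l, l \in L -> 1 < #|l|) /\
  (forall x y : T, x != y -> exists! l, [/\ l \in L, x \in l & y \in l]).

Definition const_line_size (T : finType) (L : {set {set T}}) (k : nat) : Prop :=
  forall l, l \in L -> #|l| = k.

Definition is_aut (T : finType) (L : {set {set T}}) (g : {perm T}) : Prop :=
  [set g @: (l : {set T}) | l in L] = L.

Definition aut_group (T : finType) (L : {set {set T}}) (G : {group {perm T}}) : Prop :=
  forall g, g \in G -> is_aut L g.

Definition line_transitive (T : finType) (L : {set {set T}}) (G : {group {perm T}}) : Prop :=
  forall l1 l2, l1 \in L -> l2 \in L -> exists2 g, g \in G & g @: l1 = l2.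

Definition G_invariant (T : finType) (G : {group {perm T}}) (P : {set {set T}}) : Prop :=
  forall g C, g \in G -> C \in P -> g @: C \in P.

Definition nontrivial_partition (T : finType) (P : {set {set T}}) : Prop :=
  partition P [set: T] /\ 1 < #|P| /\ (forall C, C \in P -> 1 < #|C|).

Definition dnum (T : finType) (P : {set {set T}}) (l : {set T}) (i : nat) : nat :=
  #|[set C in P | #|C :&: l| == i]|.

(* spec S = { i > 0 : d_i <> 0 }.  Since d_i does not depend on the line
   (line-transitivity), we take i in spec iff d_i(l) <> 0 for some line l. *)
Definition spec (T : finType) (L : {set {set T}}) (P : {set {set T}}) (i : nat) : bool :=
  (0 < i) && [exists l in L, dnum P l i != 0].

(* The induced linear space S|_F has constant line size h: every line meeting
   F in at least two points meets it in exactly h points. *)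
Definition induced_const_line_size (T : finType) (L : {set {set T}}) (F : {set T}) (h : nat) : Prop :=
  forall l, l \in L -> 2 <= #|l :&: F| -> #|l :&: F| = h.

(* Main.v *)
Require Import Defs.
From mathcomp Require Import all_boot fingroup perm.
From mathcomp Require Import zify.
From Stdlib Require Import Classical.
Set Implicit Arguments. Unset Strict Implicit. Unset Printing Implicit Defensive.

Definition ln (T : finType) (L : {set {set T}}) (x y : T) : {set T} :=
  odflt set0 [pick l in L | (x \in l) && (y \in l)].

Lemma lnP (T : finType) (L : {set {set T}}) x y : linear_space L -> x != y ->
  [/\ ln L x y \in L, x \in ln L x y & y \in ln L x y].
Proof.
case=> _ H xy; rewrite /ln; case: pickP => [l /andP[lL /andP[]]|/= N] //.
have [l [[lL xl yl] _]] := H x y xy.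
by have := N l; rewrite lL xl yl.
Qed.

Lemma ln_uniq (T : finType) (L : {set {set T}}) x y l : linear_space L -> x != y ->
  l \in L -> x \in l -> y \in l -> l = ln L x y.
Proof.
move=> Hl xy lL xl yl; have [a b c] := lnP Hl xy.
case: Hl => _ H; have [l0 [_ U]] := H x y xy.
by rewrite -(U l) // -(U (ln L x y)).
Qed.

Lemma exists_other (T : finType) (x : T) : 1 < #|T| -> exists y, y != x.
Proof.
move=> h; have : 0 < #|[set~ x]| by rewrite cardsC1; lia.
by case/card_gt0P => y; rewrite !inE => ?; exists y.
Qed.

Lemma line_avoid (T : finType) (L : {set {set T}}) k x :
  linear_space L -> const_line_size L k -> 2 < k -> k < #|T| ->
  exists2 l, l \in L & x \notin l.
Proof.
move=> Hl Hk k2 kT; have [y yx] := exists_other x (ltn_trans (ltnW k2) kT).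
have xy : x != y by rewrite eq_sym.
have [mL xm ym] := lnP Hl xy.
have : 0 < #|~: ln L x y|.
  by have := cardsC (ln L x y); rewrite (Hk _ mL); lia.
case/card_gt0P => z; rewrite inE => zm.
have yz : y != z by apply: contraNneq zm => <-.
have [lL yl zl] := lnP Hl yz.
exists (ln L y z) => //; apply/negP => xl.
by move: zm; rewrite -(ln_uniq Hl xy lL xl yl) zl.
Qed.

Lemma r_ge (T : finType) (L : {set {set T}}) k x :
  linear_space L -> const_line_size L k -> 2 < k -> k < #|T| ->
  k <= #|[set l in L | x \in l]|.
Proof.
move=> Hl Hk k2 kT; have [l lL xl] := line_avoid x Hl Hk k2 kT.
rewrite -(Hk _ lL) -(card_in_imset (f := ln L x)).
  apply: subset_leq_card; apply/subsetP => m /imsetP [p pl ->].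
  have xp : x != p by apply: contraNneq xl => ->.
  by have [? ? ?] := lnP Hl xp; rewrite inE; apply/andP.
move=> p q pl ql E; apply/eqP/negPn/negP => pq.
have xp : x != p by apply: contraNneq xl => ->.
have xq : x != q by apply: contraNneq xl => ->.
have [mL xm pm] := lnP Hl xp.
have [_ _ qm] := lnP Hl xq; rewrite -E in qm.
have := ln_uniq Hl pq mL pm qm; rewrite -(ln_uniq Hl pq lL pl ql) => ml.
by move: xl; rewrite -ml xm.
Qed.

Lemma card_sum (T : finType) (A B : {set T}) :
  #|A :&: B| = \sum_(y in B) (y \in A).
Proof.
rewrite -sum1_card big_mkcond /= [RHS]big_mkcond /=; apply: eq_bigr => y _.
by rewrite !inE; case: (y \in A); case: (y \in B).
Qed.

Lemma count_through (T : finType) (L : {set {set T}}) x (S : {set T}) :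
  linear_space L -> x \notin S ->
  #|S| = \sum_(l in [set l in L | x \in l]) #|l :&: S|.
Proof.
move=> Hl xS.
under eq_bigr => l _ do rewrite card_sum.
rewrite exchange_big /= -sum1_card; apply: eq_bigr => y yS.
have xy : x != y by apply: contraNneq xS => ->.
rewrite (_ : \sum_(i in _) _ = #|[set l in [set l in L | x \in l] | y \in l]|); last first.
  rewrite -sum1_card big_mkcond [RHS]big_mkcond /=; apply: eq_bigr => l _.
  by rewrite !inE; case: (y \in l); case: (_ && _).
rewrite (_ : [set l in _ | _] = [set ln L x y]) ?cards1 //.
apply/setP => l; rewrite !inE; apply/idP/idP.
  by case/andP=> /andP[lL xl] yl; apply/eqP; apply: ln_uniq.
by move/eqP->; have [-> -> ->] := lnP Hl xy.
Qed.

Lemma card_sumT (T : finType) (A : {set T}) : #|A| = \sum_(y : T) (y \in A).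
Proof. by have := card_sum A [set: T]; rewrite setIT => ->; apply: eq_bigl => y; rewrite inE. Qed.

Lemma spec_mem (T : finType) (L P : {set {set T}}) l C :
  l \in L -> C \in P -> 0 < #|C :&: l| -> spec L P #|C :&: l|.
Proof.
move=> lL CP h; rewrite /spec h /=; apply/existsP; exists l; rewrite lL /=.
rewrite /dnum -lt0n; apply/card_gt0P; exists C; by rewrite inE CP eqxx.
Qed.

Theorem theorem4p2 (T : finType) (L : {set {set T}}) (k : nat)
  (G : {group {perm T}}) (P : {set {set T}}) (c d : nat) :
  linear_space L -> const_line_size L k -> 2 < k -> k < #|T| ->
  aut_group L G -> line_transitive L G ->
  nontrivial_partition P -> G_invariant G P ->
  #|P| = d -> (forall C, C \in P -> #|C| = c) ->
  [/\ exists i j, [/\ i != j, spec L P i & spec L P j],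
      ~~ spec L P c
    & forall h, 2 <= h -> (forall i, spec L P i = (i == 1) || (i == h)) ->
        forall C, C \in P -> induced_const_line_size L C h].
Proof.
move=> Hl Hk k2 kT Haut Htr [Hpart [Pd Pc]] Hinv Hd Hc.
have v_dc : #|T| = d * c.
  rewrite -cardsT (card_partition Hpart) -Hd -sum_nat_const.
  by apply: eq_bigr => C CP; rewrite Hc.
have [C0 C0P] : exists C, C \in P by apply/card_gt0P; exact: ltnW Pd.
have c2 : 1 < c by rewrite -(Hc _ C0P) Pc.
have d2 : 1 < d by rewrite -Hd.
case/and3P: Hpart => /eqP cov _ _.
split.
-
  apply: NNPP => Hn.
  have U : forall i j, spec L P i -> spec L P j -> i = j.
    move=> i j si sj; case: (eqVneq i j) => // ij; case: Hn; by exists i, j.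
  have /card_gt0P [x _] : 0 < #|T| by lia.
  have xc : x \in cover P by rewrite cov inE.
  set C1 := pblock P x.
  have C1P : C1 \in P by apply: pblock_mem.
  have xC1 : x \in C1 by rewrite mem_pblock.
  have [y yx] := exists_other x (ltn_trans (ltnW k2) kT).
  have xy : x != y by rewrite eq_sym.
  have [l0L xl0 _] := lnP Hl xy.
  set i0 := #|C1 :&: ln L x y|.
  have Hi : forall l, l \in [set l in L | x \in l] -> #|C1 :&: l| = i0.
    move=> l; rewrite inE => /andP[lL xl]; apply: U; apply: spec_mem => //;
    by apply/card_gt0P; exists x; rewrite inE xC1.
  have i0k : i0 <= k by rewrite -(Hk _ l0L); apply: subset_leq_card; apply: subsetIr.
  set r := #|[set l in L | x \in l]|.
  have rk : k <= r by apply: r_ge.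
  have E1 : c - 1 = r * (i0 - 1).
    have -> : c - 1 = #|C1 :\ x| by have := cardsD1 x C1; rewrite xC1 Hc //; lia.
    rewrite (@count_through _ L x (C1 :\ x) Hl); last by rewrite !inE eqxx.
    rewrite /r -sum_nat_const; apply: eq_bigr => l lx.
    rewrite -(Hi l lx) (cardsD1 x (C1 :&: l)).
    move: lx; rewrite !inE => /andP[_ ->]; rewrite xC1 add1n subn1 /=.
    by apply: eq_card => z; rewrite !inE; case: (z \in l); case: (z == x); case: (z \in C1).
  have E2 : #|T| - c = r * (k - i0).
    have -> : #|T| - c = #|~: C1| by have := cardsC C1; rewrite Hc //; lia.
    rewrite (@count_through _ L x (~: C1) Hl); last by rewrite !inE xC1.
    rewrite /r -sum_nat_const; apply: eq_bigr => l lx.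
    move: (lx); rewrite inE => /andP[lL _].
    rewrite -(Hi l lx) -(Hk _ lL); have := cardsID C1 l; rewrite setDE (setIC l C1); lia.
  have dv : c %| (c - 1) * (k - i0).
    rewrite E1 -mulnA (mulnC (i0 - 1)) mulnA -E2 v_dc.
    apply: dvdn_mulr; rewrite -[X in _ - X]mul1n -mulnBl; exact: dvdn_mull (dvdnn c).
  rewrite Gauss_dvdr in dv; last first.
    by have := coprimeSn (c - 1); rewrite (_ : (c - 1).+1 = c) //; lia.
  have kpos : 0 < k - i0.
    have : 0 < #|T| - c by rewrite v_dc; nia.
    by rewrite E2 muln_gt0 => /andP[].
  have := dvdn_leq kpos dv; nia.
-
  apply/negP => Hs.
  case/andP: Hs => _ /existsP [l0 /andP[l0L]].
  rewrite /dnum -lt0n => /card_gt0P [C /[!inE] /andP[CP /eqP E]].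
  have Cl0 : C \subset l0.
    have : C :&: l0 = C.
      apply/setP; apply/subset_cardP; first by rewrite E Hc.
      exact: subsetIl.
    by move/setIidPl.
  have every : forall l, l \in L -> exists2 C', C' \in P & C' \subset l.
    move=> l lL; have [g gG gl] := Htr _ _ l0L lL.
    exists (g @: C); first exact: Hinv.
    by rewrite -gl; apply: imsetS.
  set f := fun C : {set T} => odflt set0 [pick l in L | C \subset l].
  have LP : #|L| <= d.
    rewrite -Hd; apply: leq_trans (leq_imset_card f P).
    apply: subset_leq_card; apply/subsetP => l lL.
    have [C' C'P C'l] := every l lL.
    apply/imsetP; exists C' => //; rewrite /f; case: pickP => [l' /andP[l'L C'l']|/= N]; last first.
      by have := N l; rewrite lL C'l.
    have /card_gt1P [a [b [aC bC ab]]] : 1 < #|C'| by apply: Pc.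
    have al := subsetP C'l a aC; have bl := subsetP C'l b bC.
    have al' := subsetP C'l' a aC; have bl' := subsetP C'l' b bC.
    by rewrite /= (ln_uniq Hl ab lL al bl) (ln_uniq Hl ab l'L al' bl').
  have vL : #|T| <= #|L|.
    have S1 : \sum_(l in L) #|l| = #|L| * k.
      by rewrite -sum_nat_const; apply: eq_bigr => l lL; rewrite Hk.
    have S2 : \sum_(l in L) #|l| = \sum_(x : T) #|[set l in L | x \in l]|.
      under eq_bigr => l _ do rewrite card_sumT.
      rewrite exchange_big /=; apply: eq_bigr => x _.
      rewrite -sum1_card [RHS]big_mkcond /= [LHS]big_mkcond /=; apply: eq_bigr => l _.
      by rewrite !inE; case: (x \in l); case: (l \in L).
    have : #|T| * k <= #|L| * k.
      rewrite -S1 S2 -sum_nat_const; apply: leq_sum => x _; exact: r_ge.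
    rewrite leq_pmul2r //; lia.
  nia.
-
  move=> h h2 Hs C CP l lL hl.
  have pos : 0 < #|C :&: l| by rewrite setIC; apply: leq_trans hl.
  have := spec_mem lL CP pos; rewrite Hs setIC => /orP[/eqP e|/eqP //].
  by move: hl; rewrite e.
Qed.
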